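(* Let $G$, $k\ge 3$, the choice strings $c_{i,j}$, the template string $t$, $L$ and $d$ be as in the binary construction in the context, and let $s\in\{0,1\}^L$ be a solution, i.e. $t$ and every choice string $c_{i,j}$ ($1\le i<j\le k$) have a substring of length $L$ at Hamming distance at most $d$ from $s$. Then the encoding part of $s$ contains exactly $k$ symbols $1$.
   Context: Let $G=(V,E)$ be an undirected simple graph with $V=\{v_1,\dots,v_n\}$ and edge set $E=\{e_1,\dots,e_m\}$, and let $k\ge 3$ be an integer; put $N=\binom{k}{2}$ and $b=nk-2k+2$. All strings are over $\{0,1\}$. For $1\le p\le n$ let $\mathrm{number}(p)=0^{p-1}10^{n-p}$. Let $\mathrm{front\_tag}=(1^{3nk}0)^{nk}$ (length $(3nk+1)nk$). Order the pairs $(i,j)$, $1\le i<j\le k$, lexicographically and let $i'$ be the position of $(i,j)$ in this order. For an edge $e$ joining $v_r,v_s$ with $r<s$ let $\mathrm{encode}(i,j,e)=(0^n)^{i-1}\,\mathrm{number}(r)\,(0^n)^{j-i-1}\,\mathrm{number}(s)\,(0^n)^{k-j}$, $\mathrm{back\_tag}(i')=0^{(i'-1)b}1^{b}0^{(N-i')b}$, and $\mathrm{block}(i,j,e)=\mathrm{front\_tag}\,\mathrm{encode}(i,j,e)\,\mathrm{back\_tag}(i')$. The choice string is $c_{i,j}=\mathrm{block}(i,j,e_1)\cdots\mathrm{block}(i,j,e_m)$. The template string is $t=\mathrm{front\_tag}\,1^{nk}\,0^{Nb}$. Set $L=(3nk+1)nk+nk+Nb$ and $d=nk-k$. For a string $s$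 of length $L$, its encoding part is the substring of its positions $(3nk+1)nk+1,\dots,(3nk+1)nk+nk$. *)

(* Defs.v *)
From mathcomp Require Import all_boot.
Set Implicit Arguments. Unset Strict Implicit. Unset Printing Implicit Defensive.

Definition zeros (l : nat) : seq bool := nseq l false.
Definition ones (l : nat) : seq bool := nseq l true.

Definition number (n p : nat) : seq bool := zeros (p - 1) ++ [:: true] ++ zeros (n - p).

Definition front_tag (n k : nat) : seq bool :=
  flatten (nseq (n * k) (ones (3 * n * k) ++ [:: false])).

Definition Npairs (k : nat) : nat := 'C(k, 2).
Definition bparam (n k : nat) : nat := n * k - 2 * k + 2.

Definition pairs (k : nat) : seq (nat * nat) :=
  flatten [seq [seq (i, j) | j <- iota i.+1 (k - i)] | i <- iota 1 k].

Definition pair_pos (k i j : nat) : nat := (index (i, j) (pairs k)).+1.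

(* encode(i,j,e) for an edge e = (r,s), r < s *)
Definition encode (n k i j : nat) (e : nat * nat) : seq bool :=
  flatten (nseq (i - 1) (zeros n)) ++ number n e.1 ++
  flatten (nseq (j - i - 1) (zeros n)) ++ number n e.2 ++
  flatten (nseq (k - j) (zeros n)).

Definition back_tag (n k i' : nat) : seq bool :=
  zeros ((i' - 1) * bparam n k) ++ ones (bparam n k) ++
  zeros ((Npairs k - i') * bparam n k).

Definition block (n k i j : nat) (e : nat * nat) : seq bool :=
  front_tag n k ++ encode n k i j e ++ back_tag n k (pair_pos k i j).

Definition choice_string (n k : nat) (E : seq (nat * nat)) (i j : nat) : seq bool :=
  flatten [seq block n k i j e | e <- E].

Definition template (n k : nat) : seq bool :=
  front_tag n k ++ ones (n * k) ++ zeros (Npairs k * bparam n k).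

Definition Lparam (n k : nat) : nat :=
  (3 * n * k + 1) * (n * k) + n * k + Npairs k * bparam n k.
Definition dparam (n k : nat) : nat := n * k - k.

(* Hamming distance of two strings (used on strings of equal length) *)
Definition hamming (s u : seq bool) : nat :=
  count (fun p : bool * bool => p.1 != p.2) (zip s u).

Definition close_substring (d : nat) (s c : seq bool) : Prop :=
  exists p, p + size s <= size c /\ hamming s (take (size s) (drop p c)) <= d.

Definition encoding_part (n k : nat) (s : seq bool) : seq bool :=
  take (n * k) (drop ((3 * n * k + 1) * (n * k)) s).

(* Main.v *)
From mathcomp Require Import all_boot zify.
Require Import Defs.
Set Implicit Arguments. Unset Strict Implicit. Unset Printing Implicit Defensive.


Lemma count_le_sum2 (T : eqType) (f1 f2 g : pred T) (s : seq T) :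
  (forall x, x \in s -> f1 x + f2 x <= g x) -> count f1 s + count f2 s <= count g s.
Proof.
elim: s => [|x s IH] H //=.
have h1 := H x (mem_head _ _).
have h2 : count f1 s + count f2 s <= count g s by apply: IH => y Hy; apply: H; rewrite inE Hy orbT.
lia.
Qed.

Lemma count_ge_sum2 (T : eqType) (f1 f2 g : pred T) (s : seq T) :
  (forall x, x \in s -> g x <= f1 x + f2 x) -> count g s <= count f1 s + count f2 s.
Proof.
elim: s => [|x s IH] H //=.
have h1 := H x (mem_head _ _).
have h2 : count g s <= count f1 s + count f2 s by apply: IH => y Hy; apply: H; rewrite inE Hy orbT.
lia.
Qed.

Lemma count_diff (T : Type) (f g : pred T) s :
  count f s <= count g s + count (fun x => f x != g x) s.
Proof.
elim: s => [|x s IH] //=.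
case: (f x); case: (g x) => /=; lia.
Qed.

Lemma count_iota_sub (f : pred nat) a m b l :
  a <= b -> b + l <= a + m -> count f (iota b l) <= count f (iota a m).
Proof.
move=> h1 h2.
have -> : m = (b - a) + (l + (a + m - b - l)) by lia.
rewrite iotaD iotaD !count_cat.
have -> : a + (b - a) = b by lia.
lia.
Qed.

Lemma count_iota_disj (f : pred nat) a1 l1 a2 l2 L :
  a1 + l1 <= a2 -> a2 + l2 <= L ->
  count f (iota a1 l1) + count f (iota a2 l2) <= count f (iota 0 L).
Proof.
move=> h1 h2.
have -> : L = a1 + (l1 + ((a2 - a1 - l1) + (l2 + (L - a2 - l2)))) by lia.
rewrite iotaD iotaD iotaD iotaD !count_cat /= !add0n.
have -> : a1 + l1 + (a2 - a1 - l1) = a2 by lia.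
lia.
Qed.

Lemma count_mod_window0 P c b : 0 < P -> c < P ->
  count (fun y => y %% P == c) (iota b P) = 1.
Proof.
move=> hP hc.
elim: b => [|b IH].
  rewrite (@eq_in_count _ _ (pred1 c)); last first.
    by move=> y; rewrite mem_iota /= => hy; rewrite modn_small //; lia.
  by rewrite count_uniq_mem ?iota_uniq // mem_iota; case: (c < 0 + P) (hc) => //; lia.
case: P hP hc IH => [//|P'] _ hc IH.
rewrite /= in IH.
have -> : iota b.+1 P'.+1 = iota b.+1 P' ++ [:: b.+1 + P'].
  by rewrite -[P'.+1]addn1 iotaD.
rewrite count_cat /=.
have -> : (b.+1 + P') %% P'.+1 = b %% P'.+1.
  by rewrite addSnnS modnDr.
lia.
Qed.

Lemma count_mod_window P c d a : 0 < P -> c < P ->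
  count (fun x => (x + d) %% P == c) (iota a P) = 1.
Proof.
move=> hP hc.
have -> : count (fun x => (x + d) %% P == c) (iota a P) =
          count (fun y => y %% P == c) (iota (d + a) P).
  by rewrite iotaDl count_map; apply: eq_count => x /=; rewrite addnC.
exact: count_mod_window0.
Qed.

Lemma count_mod_windows P c d a j : 0 < P -> c < P ->
  count (fun x => (x + d) %% P == c) (iota a (j * P)) = j.
Proof.
move=> hP hc; elim: j a => [|j IH] a //.
rewrite mulSnr iotaD count_cat IH count_mod_window //; lia.
Qed.

Lemma count_mod_lower P c d a j l : 0 < P -> c < P -> j * P <= l ->
  j <= count (fun x => (x + d) %% P == c) (iota a l).
Proof.
move=> hP hc hl.
rewrite -{1}(count_mod_windows d a j hP hc).
apply: count_iota_sub; lia.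
Qed.

Lemma count_mod_upper P c d a l : 0 < P -> c < P ->
  count (fun x => (x + d) %% P == c) (iota a l) <= l %/ P + 1.
Proof.
move=> hP hc.
rewrite {1}(divn_eq l P) iotaD count_cat count_mod_windows //.
rewrite leq_add2l.
rewrite -(count_mod_window d (a + l %/ P * P) hP hc).
apply: count_iota_sub => //.
rewrite leq_add2l; apply: ltnW; exact: ltn_pmod.
Qed.


Lemma hamming_count (a b : seq bool) : size a = size b ->
  hamming a b = count (fun i => nth false a i != nth false b i) (iota 0 (size a)).
Proof.
elim: a b => [|x a IH] [|y b] //= [] hs.
rewrite /hamming /= -/(hamming a b) IH //.
congr (_ + _).
have -> : iota 1 (size a) = [seq 1 + i | i <- iota 0 (size a)] by rewrite -iotaDl.
by rewrite count_map; apply: eq_count => i /=.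
Qed.

Lemma count_take_drop (s : seq bool) a l : a + l <= size s ->
  count id (take l (drop a s)) = count (nth false s) (iota a l).
Proof.
elim: l a => [|l IH] a h; first by rewrite take0.
rewrite (drop_nth false); last by lia.
rewrite /= IH //; lia.
Qed.

Lemma nth_flatten_nseq (w : seq bool) j x : x < j * size w ->
  nth false (flatten (nseq j w)) x = nth false w (x %% size w).
Proof.
elim: j x => [|j IH] x h; first by rewrite mul0n in h.
rewrite /= nth_cat.
case: ltnP => hx; first by rewrite modn_small.
rewrite IH; last by rewrite mulSn in h; lia.
congr nth.
by rewrite -{2}(subnK hx) modnDr.
Qed.

Lemma size_flatten_nseq (T : Type) (w : seq T) j : size (flatten (nseq j w)) = j * size w.
Proof. elim: j => [|j IH] //=; rewrite size_cat IH mulSn //. Qed.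

Lemma count_flatten_zeros j n : count id (flatten (nseq j (zeros n))) = 0.
Proof. elim: j => [|j IH] //=; rewrite count_cat IH /zeros count_nseq; lia. Qed.

Lemma nth_flatten_map (T : eqType) (f : T -> seq bool) (E : seq T) L e0 q y :
  (forall e, e \in E -> size (f e) = L) -> q < size E -> y < L ->
  nth false (flatten [seq f e | e <- E]) (q * L + y) = nth false (f (nth e0 E q)) y.
Proof.
elim: E q => [|e E IH] q hs //= hq hy.
have he : size (f e) = L by apply: hs; rewrite mem_head.
rewrite nth_cat he.
case: q hq => [|q] hq; first by rewrite mul0n add0n hy.
rewrite mulSn -addnA ltnNge leq_addr /= addKn IH //.
by move=> x hx; apply: hs; rewrite inE hx orbT.
Qed.

Lemma size_flatten_map (T : eqType) (f : T -> seq bool) (E : seq T) L :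
  (forall e, e \in E -> size (f e) = L) ->
  size (flatten [seq f e | e <- E]) = size E * L.
Proof.
elim: E => [|e E IH] hs //=.
rewrite size_cat hs ?mem_head // IH ?mulSn //.
by move=> x hx; apply: hs; rewrite inE hx orbT.
Qed.


Lemma mod_lt_ne P c x : P = c.+1 -> x %% P != c -> x %% P < c.
Proof.
move=> hP hne. have h : x %% P < P by rewrite ltn_pmod // hP.
by rewrite {2}hP ltnS leq_eqVlt (negbTE hne) in h.
Qed.

Lemma shift_bound K P d a l (T U : nat -> bool) :
  0 < K -> P = 3 * K + 1 -> d %% P != 0 -> (K - 1) * P <= l ->
  (forall x, a <= x -> x < a + l -> T x = (x %% P < 3 * K) /\ U x = ((x + d) %% P < 3 * K)) ->
  2 * (K - 1) <= count (fun x => T x != U x) (iota a l).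
Proof.
move=> hK hP hd hl H.
have hP0 : 0 < P by rewrite hP addn1.
have hc : 3 * K < P by rewrite hP addn1.
have c1 := count_mod_lower 0 a hP0 hc hl.
have c2 := count_mod_lower d a hP0 hc hl.
have := @count_le_sum2 _ (fun x => (x + 0) %% P == 3 * K) (fun x => (x + d) %% P == 3 * K)
  (fun x => T x != U x) (iota a l).
move=> /(_ _) hh.
suff: count (fun x => (x + 0) %% P == 3 * K) (iota a l) +
      count (fun x => (x + d) %% P == 3 * K) (iota a l) <= count (fun x => T x != U x) (iota a l) by lia.
apply: hh => x; rewrite mem_iota => /andP [h1 h2].
have [-> ->] := H x h1 h2.
rewrite addn0.
have hP1 : P = (3 * K).+1 by rewrite hP addn1.
have key : (x %% P == 3 * K) -> ((x + d) %% P == 3 * K) -> False.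
  move=> /eqP e1 /eqP e2.
  have : (x + d == x + 0 %[mod P]) by rewrite addn0 e1 e2.
  by rewrite eqn_modDl mod0n (negbTE hd).
case: (boolP (x %% P == 3 * K)) => e1; case: (boolP ((x + d) %% P == 3 * K)) => e2 /=.
- by case: (key e1 e2).
- by rewrite (eqP e1) ltnn (mod_lt_ne hP1 e2).
- by rewrite (eqP e2) ltnn (mod_lt_ne hP1 e1).
- by [].
Qed.

Lemma misalign (K k b N P F B L r : nat) (T U : nat -> bool) :
  3 <= k -> 2 * k <= K -> b = K - 2 * k + 2 -> k <= N ->
  P = 3 * K + 1 -> F = K * P -> B = N * b -> L = F + K + B ->
  0 < r -> r < L ->
  (forall x, x < F -> T x = (x %% P < 3 * K)) ->
  (forall x, F <= x -> x < F + K -> T x) ->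
  (forall x, F + K <= x -> ~~ T x) ->
  (forall x, x < L -> r + x < F -> U x = ((x + r) %% P < 3 * K)) ->
  (forall x, x < L -> L <= r + x -> r + x < L + F -> U x = ((r + x - L) %% P < 3 * K)) ->
  (forall a l, F <= r + a -> r + a + l <= L -> count U (iota a l) <= b + 2) ->
  2 * K - 2 * k + 1 <= count (fun x => T x != U x) (iota 0 L).
Proof.
move=> hk hK hb hN hP hF hB hL hr0 hrL T1 T2 T3 U1 U2 U3.
have hK6 : 6 <= K by lia.
have hP0 : 0 < P by lia.
have hP19 : 19 <= P by lia.
have hc : 3 * K < P by lia.
have hP1 : P = (3 * K).+1 by lia.
have [W hW] : exists W, W = (K - 1) * P by eexists.
have hFK : W + P = F by rewrite hF hW -mulSnr; congr (_ * _); lia.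
have [LP hLP] : exists LP, LP = L * P by eexists.
have hLP1 : L <= LP by rewrite hLP leq_pmulr.
have kb1 : k * b <= B by rewrite hB leq_mul2r hN orbT.
have hb2 : 2 <= b by lia.
have kb2 : 3 * b + 2 * k <= k * b + 6 by clear -hk hb2; nia.
have [kb hkb] : exists kb, kb = k * b by eexists.
rewrite -hkb in kb1 kb2.
clear hF hB hN.
have symc : forall s, count (fun x => U x != T x) s = count (fun x => T x != U x) s.
  by move=> s; apply: eq_count => x /=; rewrite eq_sym.
case: (leqP F r) => hFr.
  case: (leqP (3 * K) (L - r)) => hm.
  -
    have cT : count T (iota 0 (3 * K)) = 3 * K.
      rewrite (@eq_in_count _ _ predT) ?count_predT ?size_iota //.
      move=> x; rewrite mem_iota add0n => hx /=; rewrite T1; last by lia.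
      by rewrite modn_small //; lia.
    have cU : count U (iota 0 (3 * K)) <= b + 2 by apply: U3; lia.
    have := count_diff T U (iota 0 (3 * K)).
    have : count (fun x => T x != U x) (iota 0 (3 * K)) <= count (fun x => T x != U x) (iota 0 L).
      by apply: count_iota_sub; lia.
    lia.
  -
    set m := L - r.
    set d := LP - m.
    have hd : d %% P != 0.
      apply/negP => /eqP hd0.
      have e : d + m = L * P by rewrite /d /m; lia.
      have : (d + m) %% P = m.
        by rewrite -modnDml hd0 add0n modn_small //; lia.
      rewrite e modnMl; lia.
    have := @shift_bound K P d m (F - m) T U.
    have sub : count (fun x => T x != U x) (iota m (F - m)) <= count (fun x => T x != U x) (iota 0 L).
      by apply: count_iota_sub; lia.
    move=> H; have : 2 * (K - 1) <= count (fun x => T x != U x) (iota m (F - m)).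
      apply: H => //; first by lia.
        by rewrite -hW; lia.
      move=> x h1 h2; split; first by apply: T1; lia.
      rewrite U2; try lia.
      have -> : x + d = L * P + (r + x - L) by rewrite /d /m; lia.
      by rewrite modnMDl.
    lia.
case: (ltnP r (3 * K)) => h3.
  have := @shift_bound K P r 0 (F - r) T U.
  have sub : count (fun x => T x != U x) (iota 0 (F - r)) <= count (fun x => T x != U x) (iota 0 L).
    by apply: count_iota_sub; lia.
  move=> H; have : 2 * (K - 1) <= count (fun x => T x != U x) (iota 0 (F - r)).
    apply: H => //; first by lia.
      by rewrite modn_small //; lia.
      by rewrite -hW; lia.
    move=> x h1 h2; split; first by apply: T1; lia.
    by rewrite U1 //; lia.
  lia.
case: (leqP r B) => hrB.
  have cU : count U (iota (L - r) (3 * K)) = 3 * K.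
    rewrite (@eq_in_count _ _ predT) ?count_predT ?size_iota //.
    move=> x; rewrite mem_iota => /andP [h1 h2] /=; rewrite U2; try lia.
    by rewrite modn_small //; lia.
  have cT : count T (iota (L - r) (3 * K)) = 0.
    apply/eqP; rewrite -leqn0 leqNgt -has_count; apply/hasP => [[x]].
    rewrite mem_iota => /andP [h1 h2]; apply/negP; apply: T3; lia.
  have := count_diff U T (iota (L - r) (3 * K)); rewrite symc.
  have : count (fun x => T x != U x) (iota (L - r) (3 * K)) <= count (fun x => T x != U x) (iota 0 L).
    by apply: count_iota_sub; lia.
  lia.
set G := K + B.
set d := LP + r - L.
have cT1 : K + B <= count T (iota (F - r) G) + count (fun x => (x + 0) %% P == 3 * K) (iota (F - r) G).
  have := @count_ge_sum2 _ T (fun x => (x + 0) %% P == 3 * K) predT (iota (F - r) G).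
  rewrite count_predT size_iota; apply => x; rewrite mem_iota => /andP [h1 h2] /=.
  rewrite addn0.
  case: (ltnP x F) => hx; last by rewrite T2 //; lia.
  rewrite T1 //.
  case: (boolP (x %% P == 3 * K)) => e; first by rewrite addn1.
  by rewrite (mod_lt_ne hP1 e).
have cU1 : count U (iota (F - r) G) <= b + 2 by apply: U3; lia.
have d1 := count_diff T U (iota (F - r) G).
have z1 := count_mod_upper 0 (F - r) G hP0 hc.
have cU2 : B <= count U (iota (F + K) B) + count (fun x => (x + d) %% P == 3 * K) (iota (F + K) B).
  have := @count_ge_sum2 _ U (fun x => (x + d) %% P == 3 * K) predT (iota (F + K) B).
  rewrite count_predT size_iota; apply => x; rewrite mem_iota => /andP [h1 h2] /=.
  have -> : x + d = L * P + (r + x - L) by rewrite /d; lia.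
  rewrite modnMDl U2; try lia.
have cT2 : count T (iota (F + K) B) = 0.
  apply/eqP; rewrite -leqn0 leqNgt -has_count; apply/hasP => [[x]].
  rewrite mem_iota => /andP [h1 h2]; apply/negP; apply: T3; lia.
have d2 := count_diff U T (iota (F + K) B); rewrite symc in d2.
have z2 := count_mod_upper d (F + K) B hP0 hc.
have disj := @count_iota_disj (fun x => T x != U x) (F - r) G (F + K) B L.
have t1 : G %/ P * P <= G := leq_trunc_div _ _.
have t2 : B %/ P * P <= B := leq_trunc_div _ _.
have t1' : 19 * (G %/ P) <= G.
  apply: leq_trans t1; rewrite mulnC; exact: leq_mul.
have t2' : 19 * (B %/ P) <= B.
  apply: leq_trans t2; rewrite mulnC; exact: leq_mul.
have : count (fun x => T x != U x) (iota (F - r) G) + count (fun x => T x != U x) (iota (F + K) B) <=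
       count (fun x => T x != U x) (iota 0 L) by apply: disj; lia.
clear t1 t2.
lia.
Qed.


Lemma count_const (f : pred nat) a l (v : bool) :
  (forall x, a <= x -> x < a + l -> f x = v) -> count f (iota a l) = v * l.
Proof.
move=> H.
rewrite (@eq_in_count _ _ (fun _ => v)); last first.
  by move=> x; rewrite mem_iota => /andP [h1 h2]; apply: H.
by case: v {H} => /=; [rewrite count_predT size_iota mul1n | rewrite count_pred0].
Qed.

Lemma size_front n k : size (front_tag n k) = (3 * n * k + 1) * (n * k).
Proof.
by rewrite /front_tag size_flatten_nseq size_cat /ones size_nseq /= addn1 mulnC.
Qed.

Lemma nth_front n k x : x < (3 * n * k + 1) * (n * k) ->
  nth false (front_tag n k) x = (x %% (3 * n * k + 1) < 3 * n * k).
Proof.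
move=> hx.
have hs : size (ones (3 * n * k) ++ [:: false]) = 3 * n * k + 1
  by rewrite size_cat /ones size_nseq addn1.
rewrite /front_tag nth_flatten_nseq; last by rewrite hs mulnC.
rewrite hs.
have hlt : x %% (3 * n * k + 1) < 3 * n * k + 1 by rewrite ltn_pmod // addn1.
rewrite nth_cat /ones size_nseq nth_nseq.
case: ltnP => h //.
have -> : x %% (3 * n * k + 1) - 3 * n * k = 0 by lia.
by [].
Qed.

Lemma size_number n r : 0 < r <= n -> size (number n r) = n.
Proof. move=> h; rewrite /number !size_cat /zeros !size_nseq /=; lia. Qed.

Lemma count_number n r : count id (number n r) = 1.
Proof. by rewrite /number !count_cat /zeros !count_nseq /=; lia. Qed.

Lemma size_encode n k i j (e : nat * nat) : 1 <= i -> i < j -> j <= k ->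
  0 < e.1 <= n -> 0 < e.2 <= n -> size (encode n k i j e) = n * k.
Proof.
move=> h1 h2 h3 he1 he2.
rewrite /encode !size_cat !size_flatten_nseq /zeros !size_nseq /=.
have -> : k = (i - 1) + 1 + (j - i - 1) + 1 + (k - j) by lia.
rewrite !mulnDr !muln1.
have -> : (i - 1) + 1 + (j - i - 1) + 1 + (k - j) - j = k - j by lia.
rewrite (mulnC (i - 1)) (mulnC (j - i - 1)) (mulnC (k - j)). lia.
Qed.

Lemma count_encode n k i j e : count id (encode n k i j e) = 2.
Proof. rewrite /encode !count_cat !count_flatten_zeros /zeros !count_nseq /=; lia. Qed.

Lemma size_back n k i' : 1 <= i' <= Npairs k ->
  size (back_tag n k i') = Npairs k * bparam n k.
Proof.
move=> h; rewrite /back_tag !size_cat /zeros /ones !size_nseq.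
have -> : Npairs k = (i' - 1) + 1 + (Npairs k - i') by lia.
rewrite !mulnDl mul1n.
have -> : (i' - 1) + 1 + (Npairs k - i') - i' = Npairs k - i' by lia.
lia.
Qed.

Lemma count_back n k i' : count id (back_tag n k i') = bparam n k.
Proof. by rewrite /back_tag !count_cat /zeros /ones !count_nseq /=; lia. Qed.

Lemma nth_back n k i' y :
  nth false (back_tag n k i') y = ((i' - 1) * bparam n k <= y) && (y < (i' - 1) * bparam n k + bparam n k).
Proof.
set A := (i' - 1) * bparam n k.
rewrite /back_tag -/A nth_cat /zeros /ones size_nseq.
case: (ltnP y A) => h1.
  rewrite nth_nseq if_same; symmetry; lia.
rewrite nth_cat size_nseq.
case: (ltnP (y - A) (bparam n k)) => h2.
  rewrite nth_nseq h2; symmetry; lia.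
rewrite nth_nseq if_same; symmetry; lia.
Qed.

Lemma size_block n k i j e : 1 <= i -> i < j -> j <= k ->
  0 < e.1 <= n -> 0 < e.2 <= n -> 1 <= pair_pos k i j <= Npairs k ->
  size (block n k i j e) = Lparam n k.
Proof.
move=> h1 h2 h3 he1 he2 hp.
by rewrite /block size_cat size_cat size_front size_encode // size_back // /Lparam addnA.
Qed.

Lemma nth_block_front n k i j e x : x < (3 * n * k + 1) * (n * k) ->
  nth false (block n k i j e) x = (x %% (3 * n * k + 1) < 3 * n * k).
Proof.
move=> hx; rewrite /block nth_cat size_front hx nth_front //.
Qed.

Lemma count_block_gap n k i j e : 1 <= i -> i < j -> j <= k ->
  0 < e.1 <= n -> 0 < e.2 <= n -> 1 <= pair_pos k i j <= Npairs k ->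
  count (nth false (block n k i j e)) (iota ((3 * n * k + 1) * (n * k)) (n * k + Npairs k * bparam n k))
  = bparam n k + 2.
Proof.
move=> h1 h2 h3 he1 he2 hp.
rewrite -count_take_drop; last by rewrite size_block // /Lparam addnA.
rewrite /block drop_size_cat ?size_front //.
rewrite -(size_encode h1 h2 h3 he1 he2) -(size_back n hp) -size_cat take_size.
by rewrite count_cat count_encode count_back addnC.
Qed.

Lemma count_block_enc n k i j e : 1 <= i -> i < j -> j <= k ->
  0 < e.1 <= n -> 0 < e.2 <= n -> 1 <= pair_pos k i j <= Npairs k ->
  count (nth false (block n k i j e)) (iota ((3 * n * k + 1) * (n * k)) (n * k)) = 2.
Proof.
move=> h1 h2 h3 he1 he2 hp.
rewrite -count_take_drop; last by rewrite size_block // /Lparam; lia.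
rewrite /block drop_size_cat ?size_front //.
by rewrite -(size_encode h1 h2 h3 he1 he2) take_size_cat // count_encode.
Qed.

Lemma nth_block_back n k i j e y : 1 <= i -> i < j -> j <= k ->
  0 < e.1 <= n -> 0 < e.2 <= n ->
  nth false (block n k i j e) ((3 * n * k + 1) * (n * k) + n * k + y) =
  nth false (back_tag n k (pair_pos k i j)) y.
Proof.
move=> h1 h2 h3 he1 he2.
rewrite /block nth_cat size_front ltnNge -addnA leq_addr /= addKn.
by rewrite nth_cat (size_encode h1 h2 h3 he1 he2) ltnNge leq_addr /= addKn.
Qed.

Lemma size_template n k : size (template n k) = Lparam n k.
Proof.
by rewrite /template size_cat size_cat size_front /ones /zeros !size_nseq /Lparam addnA.
Qed.

Lemma nth_template n k x :
  nth false (template n k) x =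
  if x < (3 * n * k + 1) * (n * k) then x %% (3 * n * k + 1) < 3 * n * k
  else x < (3 * n * k + 1) * (n * k) + n * k.
Proof.
rewrite /template nth_cat size_front.
case: ltnP => h; first by rewrite nth_front.
rewrite nth_cat /ones size_nseq nth_nseq.
case: ltnP => h2.
  by symmetry; apply/idP; lia.
rewrite /zeros nth_nseq if_same; symmetry; apply/negP; lia.
Qed.


Lemma Npairs_ge k : 3 <= k -> k <= Npairs k.
Proof.
case: k => [|[|[|k]]] // _.
rewrite /Npairs !binS !bin1 !bin0; lia.
Qed.

Lemma pairs_head k : 3 <= k -> exists rest, pairs k = (1, 2) :: (1, 3) :: rest.
Proof.
case: k => [|[|[|k]]] // _.
rewrite /pairs /=.
by eexists.
Qed.

Lemma pair_pos12 k : 3 <= k -> pair_pos k 1 2 = 1.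
Proof. by move=> /pairs_head [rest hr]; rewrite /pair_pos hr. Qed.

Lemma pair_pos13 k : 3 <= k -> pair_pos k 1 3 = 2.
Proof. by move=> /pairs_head [rest hr]; rewrite /pair_pos hr. Qed.


Definition valid_edge n (e : nat * nat) := (0 < e.1) && (e.1 < e.2) && (e.2 <= n).

Lemma pair_bound (n k : nat) (E : seq (nat * nat)) (s : seq bool) i j :
  3 <= k -> 2 <= n ->
  all (valid_edge n) E ->
  size s = Lparam n k ->
  count (fun x => nth false s x != nth false (template n k) x) (iota 0 (Lparam n k)) <= n * k - k ->
  1 <= i -> i < j -> j <= k -> 1 <= pair_pos k i j <= Npairs k ->
  close_substring (dparam n k) s (choice_string n k E i j) ->
  count (nth false s) (iota ((3 * n * k + 1) * (n * k)) (n * k)) +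
  count (nth false s) (iota ((3 * n * k + 1) * (n * k) + n * k) ((pair_pos k i j - 1) * bparam n k)) + bparam n k +
  count (nth false s) (iota ((3 * n * k + 1) * (n * k) + n * k + (pair_pos k i j - 1) * bparam n k + bparam n k)
      ((Npairs k - pair_pos k i j) * bparam n k))
  <= n * k - k + 2 + count (nth false s) (iota ((3 * n * k + 1) * (n * k) + n * k + (pair_pos k i j - 1) * bparam n k) (bparam n k)).
Proof.
move=> hk hn hE hs hT hi hij hj hp [p [hpL hh]].
set F := (3 * n * k + 1) * (n * k).
set b := bparam n k.
set a := (pair_pos k i j - 1) * b.
set S := nth false s.
set K := n * k.
set N := Npairs k.
set c := choice_string n k E i j.
set L := Lparam n k.
set t := template n k.
have e3 : 3 * n * k = 3 * K by rewrite /K mulnA.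
have hK2 : 2 * k <= K by rewrite /K leq_mul2r hn orbT.
have hb : b = K - 2 * k + 2 by rewrite /b /bparam.
have hN : k <= N by exact: Npairs_ge.
have hLdef : L = K * (3 * K + 1) + K + N * b by rewrite /L /Lparam -/K e3 (mulnC _ K).
have hFdef : F = K * (3 * K + 1) by rewrite /F e3 mulnC.
have hvalid : forall e : nat * nat, e \in E -> 0 < e.1 <= n /\ 0 < e.2 <= n.
  move=> [x y] he; move/allP: hE => /(_ _ he) /andP [/andP [h1 h2] h3]; rewrite /= in h1 h2 h3 *; split; lia.
have hsizeB : forall e, e \in E -> size (block n k i j e) = L.
  move=> e he; have [v1 v2] := hvalid e he; exact: size_block.
have hsc : size c = size E * L by rewrite /c /choice_string (size_flatten_map hsizeB).
rewrite hs -/L -/c in hpL hh.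
set u := take L (drop p c).
have hsu : size u = L.
  rewrite /u size_takel // size_drop; lia.
rewrite (hamming_count (a := s) (b := u)) ?hs ?hsu // -/L in hh.
have hU : forall x, x < L -> nth false u x = nth false c (p + x).
  by move=> x hx; rewrite /u nth_take // nth_drop.
have hL0 : 0 < L by rewrite hLdef; lia.
set q := p %/ L. set r := p %% L.
have hpq : p = q * L + r by rewrite /q /r -divn_eq.
have hrL : r < L by rewrite /r ltn_mod.
have hc : forall q' y, q' < size E -> y < L ->
    nth false c (q' * L + y) = nth false (block n k i j (nth (0, 0) E q')) y.
  by move=> q' y hq hy; rewrite /c /choice_string (nth_flatten_map (0, 0) hsizeB).
have hqE : q < size E.
  have : q.+1 * L <= size E * L by rewrite mulSn; lia.
  rewrite leq_mul2r; case/orP => //; lia.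
have hvq : 0 < (nth (0,0) E q).1 <= n /\ 0 < (nth (0,0) E q).2 <= n.
  by apply: hvalid; rewrite mem_nth.
case: (posnP r) => hr; last first.
  (* misaligned: contradiction *)
  exfalso.
  set T := nth false t. set U := nth false u.
  have tri : count (fun x => T x != U x) (iota 0 L) <=
             count (fun x => S x != T x) (iota 0 L) + count (fun x => S x != U x) (iota 0 L).
    apply: count_ge_sum2 => x _.
    by case: (S x); case: (T x); case: (U x).
  have hLdef' : L = F + K + N * b by rewrite hLdef hFdef.
  have Tdef : forall x, T x = if x < F then x %% (3 * K + 1) < 3 * K else x < F + K.
    by move=> x; rewrite /T /t nth_template -/F e3.
  have Uc : forall x, x < L -> U x = nth false c (p + x) by move=> x hx; rewrite /U hU.
  have U1 : forall x, x < L -> r + x < F -> U x = ((x + r) %% (3 * K + 1) < 3 * K).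
    move=> x hx hrx.
    rewrite Uc // hpq -addnA hc //; last by lia.
    rewrite nth_block_front -/F // -e3 addnC //.
  have U2 : forall x, x < L -> L <= r + x -> r + x < L + F ->
      U x = ((r + x - L) %% (3 * K + 1) < 3 * K).
    move=> x hx h1 h2.
    have hq1 : q.+1 < size E.
      have : q.+1 * L < size E * L by rewrite mulSn; lia.
      by rewrite ltn_mul2r => /andP [].
    rewrite Uc //.
    have -> : p + x = q.+1 * L + (r + x - L) by rewrite hpq mulSn; lia.
    rewrite hc //; last by lia.
    rewrite nth_block_front -/F -?e3 //; lia.
  have U3 : forall a' l, F <= r + a' -> r + a' + l <= L -> count U (iota a' l) <= b + 2.
    move=> a' l h1 h2.
    have -> : count U (iota a' l) = count (nth false (block n k i j (nth (0, 0) E q))) (iota (r + a') l).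
      rewrite iotaDl count_map; apply: eq_in_count => x; rewrite mem_iota => /andP [h3 h4] /=.
      by rewrite Uc ?hpq -?addnA ?hc //; lia.
    have [v1 v2] := hvq.
    rewrite -(count_block_gap hi hij hj v1 v2 hp).
    apply: count_iota_sub; rewrite -/F -/K -/N -/b; lia.
  have T1 : forall x, x < F -> T x = (x %% (3 * K + 1) < 3 * K) by move=> x hx; rewrite Tdef hx.
  have T2 : forall x, F <= x -> x < F + K -> T x.
    by move=> x h1 h2; rewrite Tdef ltnNge h1 /= h2.
  have T3 : forall x, F + K <= x -> ~~ T x.
    by move=> x h1; rewrite Tdef; case: ifP => h; [lia | rewrite ltnNge h1].
  have H := @misalign K k b N (3 * K + 1) F (N * b) L r T U hk hK2 hb hN erefl hFdef erefl hLdef' hr hrL T1 T2 T3 U1 U2 U3.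
  rewrite -/L -/t -/S in hT.
  rewrite /dparam -/K in hh.
  have symT : count (fun x => S x != T x) (iota 0 L) <= K - k by [].
  have symU : count (fun x => S x != U x) (iota 0 L) <= K - k by [].
  lia.
have hp0 : p = q * L by rewrite hpq hr addn0.
set blk := block n k i j (nth (0, 0) E q).
have hUb : forall x, x < L -> nth false u x = nth false blk x.
  by move=> x hx; rewrite hU // hp0 hc.
have [v1 v2] := hvq.
set i' := pair_pos k i j.
have hab : a + b + (N - i') * b = N * b.
  rewrite /a -mulSnr -mulnDl; congr (_ * _); rewrite /i' /N; lia.
have hback : forall x, F + K <= x -> x < L ->
    nth false u x = (a <= x - F - K) && (x - F - K < a + b).
  move=> x h1 h2; rewrite hUb //.
  have -> : x = F + K + (x - F - K) by lia.
  rewrite /blk /F /K nth_block_back // nth_back -/a -/b -/F -/K.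
  by have -> : F + K + (x - F - K) - F - K = x - F - K by lia.
set mis := (fun x => nth false s x != nth false u x).
have split4 : count mis (iota F K) + count mis (iota (F + K) a) + count mis (iota (F + K + a) b) +
    count mis (iota (F + K + a + b) ((N - i') * b)) <= count mis (iota 0 L).
  have : count mis (iota F (K + (a + (b + (N - i') * b)))) <= count mis (iota 0 L).
    apply: count_iota_sub => //; rewrite hLdef -hFdef; lia.
  rewrite !iotaD !count_cat !addnA; lia.
have cenc : count (nth false u) (iota F K) = 2.
  rewrite -(count_block_enc hi hij hj v1 v2 hp); apply: eq_in_count => x.
  rewrite mem_iota => /andP [h1 h2]; apply: hUb; rewrite hLdef -hFdef; lia.
clear v1 v2 hvq.
set C := (N - i') * b in split4 hab *.
have hKdef : K = n * k by [].
clearbody a i' N F b C K.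
have hxL : forall x, x < F + K + a + b + C -> x < L.
  move=> x hx; rewrite hLdef -hFdef; move: hx hab; clear; lia.
have cbef : count (nth false u) (iota (F + K) a) = 0.
  rewrite (@count_const _ _ _ false) // => x h1 h2.
  have hx : x < L by apply: hxL; move: h2 hab; clear; lia.
  rewrite hback //; move: h1 h2; clear; lia.
have cseg : count (nth false u) (iota (F + K + a) b) = b.
  rewrite (@count_const _ _ _ true) ?mul1n // => x h1 h2.
  have hx : x < L by apply: hxL; move: h2 hab; clear; lia.
  rewrite hback //; move: h1 h2; clear; lia.
have caft : count (nth false u) (iota (F + K + a + b) (C)) = 0.
  rewrite (@count_const _ _ _ false) // => x h1 h2.
  have hx : x < L by apply: hxL; move: h2 hab; clear; lia.
  rewrite hback //; move: h1 h2; clear; lia.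
have d1 := count_diff S (nth false u) (iota F K).
have d2 := count_diff S (nth false u) (iota (F + K) a).
have d3 := count_diff (nth false u) S (iota (F + K + a) b).
have d4 := count_diff S (nth false u) (iota (F + K + a + b) (C)).
have e3' : count (fun x => nth false u x != S x) (iota (F + K + a) b) = count mis (iota (F + K + a) b).
  by apply: eq_count => x; rewrite /mis eq_sym.
rewrite /dparam -hKdef in hh.
have hh' : count mis (iota 0 L) <= K - k by [].
rewrite -/mis in d1 d2 d4.
lia.
Qed.


Unset Implicit Arguments.
Theorem lemma4 (n k : nat) (E : seq (nat * nat)) (s : seq bool) :
  3 <= k ->
  uniq E ->
  all (fun e : nat * nat => (0 < e.1) && (e.1 < e.2) && (e.2 <= n)) E ->
  size s = Lparam n k ->
  close_substring (dparam n k) s (template n k) ->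
  (forall i j, 1 <= i -> i < j -> j <= k ->
     close_substring (dparam n k) s (choice_string n k E i j)) ->
  count id (encoding_part n k s) = k.
Proof.
move=> hk _ hE hs hT hC.
have hE' : all (valid_edge n) E := hE.
have hN : k <= Npairs k by exact: Npairs_ge.
have hb2 : 2 <= bparam n k by rewrite /bparam; lia.
have hL0 : 0 < Lparam n k.
  rewrite /Lparam; have : 3 * 2 <= Npairs k * bparam n k by apply: leq_mul; lia.
  lia.
have hn : 2 <= n.
  have [p [hp _]] := hC 1 2 (leqnn 1) (ltnSn 1) (ltnW hk).
  case: E hE hp {hE' hC} => [|e E'] hE hp.
    by rewrite /choice_string /= hs in hp; lia.
  move: hE => /= /andP [/andP [/andP [h1 h2] h3] _]; lia.
have [p0 [hp0 hh0]] := hT.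
rewrite hs size_template in hp0.
have p00 : p0 = 0 by lia.
rewrite p00 drop0 hs -(size_template n k) take_size in hh0.
rewrite (hamming_count (a := s) (b := template n k)) ?hs ?size_template // in hh0.
set K := n * k.
set F := (3 * n * k + 1) * (n * k).
set b := bparam n k.
set N := Npairs k.
set S := nth false s.
have hLdef : Lparam n k = F + K + N * b by [].
have hK2 : 2 * k <= K by rewrite /K leq_mul2r hn orbT.
have hbdef : b = K - 2 * k + 2 by [].
have hd : dparam n k = K - k by [].
have hTt : forall x, F <= x -> x < F + K -> nth false (template n k) x.
  by move=> x h1 h2; rewrite nth_template -/F ltnNge h1 /= h2.
have hTf : forall x, F + K <= x -> nth false (template n k) x = false.
  move=> x h1; rewrite nth_template -/F; case: ifP => h; first by lia.
  apply/negbTE; rewrite -leqNgt; exact: h1.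
have cT1 : count (nth false (template n k)) (iota F K) = K.
  by rewrite (@count_const _ _ _ true) ?mul1n // => x h1 h2; rewrite hTt.
have cT2 : count (nth false (template n k)) (iota (F + K) (N * b)) = 0.
  by rewrite (@count_const _ _ _ false) // => x h1 h2; rewrite hTf.
set mis := (fun i => S i != nth false (template n k) i).
have dT1 := count_diff (nth false (template n k)) S (iota F K).
have dT2 := count_diff S (nth false (template n k)) (iota (F + K) (N * b)).
have eT1 : count (fun x => nth false (template n k) x != S x) (iota F K) = count mis (iota F K).
  by apply: eq_count => x; rewrite /mis eq_sym.
have disj := @count_iota_disj mis F K (F + K) (N * b) (Lparam n k).
have hpp1 : 1 <= pair_pos k 1 2 <= N by rewrite pair_pos12 //; lia.
have hpp2 : 1 <= pair_pos k 1 3 <= N by rewrite pair_pos13 //; lia.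
have B1 := @pair_bound n k E s 1 2 hk hn hE' hs hh0 (leqnn 1) (ltnSn 1) (ltnW hk) hpp1 (hC 1 2 (leqnn 1) (ltnSn 1) (ltnW hk)).
have B2 := @pair_bound n k E s 1 3 hk hn hE' hs hh0 (leqnn 1) (ltnSn 2) hk hpp2 (hC 1 3 (leqnn 1) (ltnSn 2) hk).
rewrite pair_pos12 // -/F -/K -/b -/N -/S subnn mul0n !addn0 in B1.
rewrite pair_pos13 // -/F -/K -/b -/N -/S mul1n in B2.
have hw : count id (encoding_part n k s) = count S (iota F K).
  by rewrite /encoding_part count_take_drop // hs hLdef; lia.
rewrite hw.
have hN2 : 2 <= N by rewrite /N; lia.
have hh1 : count mis (iota F K) + count mis (iota (F + K) (N * b)) <= count mis (iota 0 (Lparam n k)).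
  apply: disj; rewrite ?hLdef; lia.
rewrite hd in hh0.
have hh0' : count mis (iota 0 (Lparam n k)) <= K - k by [].
clear hTt hTf hT hC disj hh0.
rewrite hLdef in hh0' hh1.
clearbody F K b N.
have [C hC] : exists C, C = (N - 2) * b by eexists.
have eN : N * b = b + (b + C).
  by rewrite hC -mulSn -mulSn; congr (_ * _); lia.
have eN1 : (N - 1) * b = b + C.
  by rewrite hC -mulSn; congr (_ * _); lia.
rewrite -hC in B2.
rewrite eN1 iotaD count_cat in B1.
have zsplit : count S (iota (F + K) (N * b)) =
   count S (iota (F + K) b) + count S (iota (F + K + b) b) + count S (iota (F + K + b + b) C).
  by rewrite eN iotaD iotaD !count_cat addnA.
clear eN eN1 hC.
move: B1 B2 dT1 dT2 eT1 hh1 hh0' hbdef hK2 cT1 cT2 zsplit.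
set z1 := count S (iota (F + K) b).
set z2 := count S (iota (F + K + b) b).
set z3 := count S (iota (F + K + b + b) C).
set w := count S (iota F K).
set zz := count S (iota (F + K) (N * b)).
set m1 := count mis (iota F K).
set m2 := count mis (iota (F + K) (N * b)).
set mt := count mis (iota 0 (F + K + N * b)).
clearbody z1 z2 z3 w zz m1 m2 mt.
move=> B1 B2 dT1 dT2 eT1 hh1 hh0' hbdef' hK2' cT1 cT2 zsplit.
lia.
Qed.
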